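(* Let $E$ be a smooth functional on $\mathcal P(\Omega)$ that is $\beta$-strongly convex ($\beta\ge0$) with respect to the Fisher-Rao metric. Let $\rho_t,\rho^*$ be smooth positive probability densities with $\rho_t\ne\rho^*$, $R_t=\sqrt{\rho_t}$, $R^*=\sqrt{\rho^*}$, $H_t=\cos^{-1}\big(\int R_tR^*dx\big)$ and $$T_t(x)=\frac{2H_t}{\sin(H_t)}\,\frac{R^*(x)-R_t(x)\cos(H_t)}{R_t(x)}.$$ Then $$E(\rho^* )\ge E(\rho_t)+\int\Big(\frac{\delta E}{\delta\rho_t}-\mathbb{E}_{\rho_t}\Big[\frac{\delta E}{\delta\rho_t}\Big]\Big)T_t\rho_tdx+\frac\beta2\int T_t^2\rho_tdx.$$
   Context: Fisher-Rao metric: $g_\rho(\sigma_1,\sigma_2)=\int\Phi_1\rho(\Phi_2-\mathbb{E}_\rho[\Phi_2])dx$ where $\sigma_i=\rho(\Phi_i-\mathbb{E}_\rho[\Phi_i])$, and $\mathbb{E}_\rho[\Phi]=\int\Phi\rho dx$. $\beta$-strong convexity means $g_\rho(\mathrm{Hess}E(\rho)\sigma,\sigma)\ge\beta g_\rho(\sigma,\sigma)$ for all $\rho$ and all $\sigma$ with $\int\sigma=0$, with Hessian w.r.t. the Fisher-Rao metric (equivalently $\frac{d^2}{ds^2}E(\gamma(s))\ge\beta g(\dot\gamma,\dot\gamma)$ along Fisher-Rao geodesics). $\frac{\delta E}{\delta\rho}$ is the $L^2$ first variation. *)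

(* Defs.v *)
From HB Require Import structures.
From mathcomp Require Import all_boot all_order all_algebra.
From mathcomp Require Import all_classical all_reals all_analysis.
Set Implicit Arguments. Unset Strict Implicit. Unset Printing Implicit Defensive.
Import Order.TTheory GRing.Theory Num.Theory numFieldNormedType.Exports.
Local Open Scope classical_set_scope.
Local Open Scope ring_scope.

Section FR.
Context {d : measure_display} {T : measurableType d} {R : realType}.
Variable mu : {measure set T -> \bar R}.

Definition pos_density (rho : T -> R) : Prop :=
  [/\ measurable_fun setT rho, (forall x, 0 < rho x),
      mu.-integrable setT (EFin \o rho) & (\int[mu]_x (rho x)%:E = 1)%E].

(** rho0 <> rho1 as elements of P(Omega), i.e. not equal mu-a.e. *)
Definition dens_neq (rho0 rho1 : T -> R) : Prop :=
  ~ {ae mu, forall x, rho0 x = rho1 x}.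

Definition expect (rho Phi : T -> R) : R := Rintegral mu setT (fun x => Phi x * rho x).

(** Fisher-Rao metric g_rho(sigma1,sigma2) = int Phi1 rho (Phi2 - E_rho[Phi2]),
    with sigma_i = rho (Phi_i - E_rho[Phi_i]); we take the representative Phi_i = sigma_i/rho. *)
Definition FR_metric (rho sigma1 sigma2 : T -> R) : R :=
  let Phi1 := fun x => sigma1 x / rho x in
  let Phi2 := fun x => sigma2 x / rho x in
  Rintegral mu setT (fun x => Phi1 x * rho x * (Phi2 x - expect rho Phi2)).

Definition FR_angle (rho0 rho1 : T -> R) : R :=
  acos (Rintegral mu setT (fun x => Num.sqrt (rho0 x) * Num.sqrt (rho1 x))).

Definition FR_geodesic (rho0 rho1 : T -> R) (s : R) : T -> R :=
  let H := FR_angle rho0 rho1 in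
  fun x => ((sin ((1 - s) * H) * Num.sqrt (rho0 x) + sin (s * H) * Num.sqrt (rho1 x))
            / sin H) ^+ 2.

Definition FR_velocity (rho0 rho1 : T -> R) (s : R) : T -> R :=
  fun x => derive1 (fun r => FR_geodesic rho0 rho1 r x) s.

Definition along (E : (T -> R) -> R) (rho0 rho1 : T -> R) : R -> R :=
  fun s => E (FR_geodesic rho0 rho1 s).

(** Smoothness of E together with dE being its (L^2) first variation,
    expressed along all Fisher-Rao geodesics:
    s |-> E(gamma s) is C^1 on [0,1], twice differentiable on ]0,1[, and
    d/ds E(gamma s) = int dE(gamma s) * d/ds gamma(s). *)
Definition FR_smooth (E : (T -> R) -> R) (dE : (T -> R) -> T -> R) : Prop :=
  forall rho0 rho1, pos_density rho0 -> pos_density rho1 -> dens_neq rho0 rho1 ->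
  let f := along E rho0 rho1 in
  let fd := fun s => Rintegral mu setT
              (fun x => dE (FR_geodesic rho0 rho1 s) x * FR_velocity rho0 rho1 s x) in
  [/\ (forall s, 0 <= s <= 1 -> mu.-integrable setT
         (fun x => (dE (FR_geodesic rho0 rho1 s) x * FR_velocity rho0 rho1 s x)%:E)),
      {within `[0, 1], continuous f},
      {within `[0, 1], continuous fd},
      (forall s, 0 < s < 1 -> derivable f s 1 /\ derive1 f s = fd s) &
      (forall s, 0 < s < 1 -> derivable (derive1 f) s 1)].

(** beta-strong convexity w.r.t. Fisher-Rao, in geodesic form:
    d^2/ds^2 E(gamma s) >= beta g(gamma', gamma'). *)
Definition FR_strongly_convex (E : (T -> R) -> R) (beta : R) : Prop :=
  forall rho0 rho1, pos_density rho0 -> pos_density rho1 -> dens_neq rho0 rho1 ->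
  forall s, 0 < s < 1 ->
    derive1n 2 (along E rho0 rho1) s >=
      beta * FR_metric (FR_geodesic rho0 rho1 s)
               (FR_velocity rho0 rho1 s) (FR_velocity rho0 rho1 s).

Definition FR_T (rhot rhos : T -> R) : T -> R :=
  let H := FR_angle rhot rhos in
  fun x => (2 * H / sin H) * ((Num.sqrt (rhos x) - Num.sqrt (rhot x) * cos H)
                              / Num.sqrt (rhot x)).

End FR.

(* Main.v *)
Require Import Defs.
From HB Require Import structures.
From mathcomp Require Import all_boot all_order all_algebra.
From mathcomp Require Import all_classical all_reals all_analysis.
From mathcomp Require Import ring lra.
Import Order.TTheory GRing.Theory Num.Theory numFieldNormedType.Exports.
Local Open Scope classical_set_scope.
Local Open Scope ring_scope.
Lemma intZ (d : measure_display) (T : measurableType d) (R : realType)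
  (mu : {measure set T -> \bar R}) (f : T -> R) (k : R) :
  mu.-integrable setT (EFin \o f) ->
  mu.-integrable setT (EFin \o (fun x => k * f x)).
Proof.
move=> h; apply: (eq_integrable measurableT _ _ _ (integrableZl measurableT k h)) => // x _ /=.
Qed.

Lemma intD (d : measure_display) (T : measurableType d) (R : realType)
  (mu : {measure set T -> \bar R}) (f g : T -> R) :
  mu.-integrable setT (EFin \o f) -> mu.-integrable setT (EFin \o g) ->
  mu.-integrable setT (EFin \o (fun x => f x + g x)).
Proof.
move=> hf hg; apply: (eq_integrable measurableT _ _ _ (integrableD measurableT hf hg)) => // x _ /=.
Qed.

Lemma int3 (d : measure_display) (T : measurableType d) (R : realType)
  (mu : {measure set T -> \bar R}) (f g h : T -> R) (a b c : R) :
  mu.-integrable setT (EFin \o f) -> mu.-integrable setT (EFin \o g) ->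
  mu.-integrable setT (EFin \o h) ->
  mu.-integrable setT (EFin \o (fun x => a * f x + b * g x + c * h x)).
Proof. by move=> hf hg hh; apply: intD; [apply: intD|]; apply: intZ. Qed.

Lemma Rint3 (d : measure_display) (T : measurableType d) (R : realType)
  (mu : {measure set T -> \bar R}) (f g h : T -> R) (a b c : R) :
  mu.-integrable setT (EFin \o f) -> mu.-integrable setT (EFin \o g) ->
  mu.-integrable setT (EFin \o h) ->
  Rintegral mu setT (fun x => a * f x + b * g x + c * h x) =
  a * Rintegral mu setT f + b * Rintegral mu setT g + c * Rintegral mu setT h.
Proof.
move=> hf hg hh.
rewrite RintegralD //; last exact: intZ.
  rewrite RintegralD //; try exact: intZ.
  by rewrite !RintegralZl.
by apply: intD; apply: intZ.
Qed.
Lemma int_sqrtprod (d : measure_display) (T : measurableType d) (R : realType)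
  (mu : {measure set T -> \bar R}) (r0 r1 : T -> R) :
  pos_density mu r0 -> pos_density mu r1 ->
  mu.-integrable setT (EFin \o (fun x => Num.sqrt (r0 x) * Num.sqrt (r1 x))).
Proof.
move=> [m0 p0 i0 _] [m1 p1 i1 _].
have i01 : mu.-integrable setT (EFin \o (fun x => r0 x + r1 x)).
  apply: (eq_integrable measurableT _ _ _ (integrableD measurableT i0 i1)) => // x _ /=.
apply: le_integrable i01 => //.
  apply/measurable_realfun.measurable_EFinP.
  apply: measurable_realfun.measurable_funM.
    exact: (measurableT_comp (measurable_realfun.continuous_measurable_fun (@sqrt_continuous R)) m0).
  exact: (measurableT_comp (measurable_realfun.continuous_measurable_fun (@sqrt_continuous R)) m1).
move=> x _ /=; rewrite lee_fin.
have a0 := sqr_sqrtr (ltW (p0 x)); have a1 := sqr_sqrtr (ltW (p1 x)).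
have s0 := sqrtr_ge0 (r0 x); have s1 := sqrtr_ge0 (r1 x).
rewrite ger0_norm; last by rewrite mulr_ge0.
rewrite ger0_norm; last by rewrite addr_ge0 // ltW.
move: a0 a1 s0 s1; move: (Num.sqrt (r0 x)) (Num.sqrt (r1 x)) => u v a0 a1 u0 v0.
rewrite -a0 -a1; nra.
Qed.
Lemma is_derive_aff (R : realType) (a b x : R) :
  is_derive x 1 (fun r : R => a * r + b) a.
Proof.
have h := is_deriveD (is_deriveZ a (is_derive_id x 1)) (is_derive_cst b x 1).
apply: is_derive_eq h _.
by rewrite /GRing.scale /= mulr1 addr0.
Qed.

Lemma is_derive_sin_aff (R : realType) (a b x : R) :
  is_derive x 1 (fun r : R => sin (a * r + b)) (a * cos (a * x + b)).
Proof.
have h := @is_derive1_comp R sin (fun r => a * r + b) x _ _ (is_derive_sin (a * x + b)) (@is_derive_aff R a b x).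
by apply: is_derive_eq h _; rewrite mulrC.
Qed.

Lemma geo_deriv (R : realType) (H S A B s : R) :
  is_derive s 1 (fun r : R => ((sin ((1 - r) * H) * A + sin (r * H) * B) / S) ^+ 2)
    (2 * ((sin ((1 - s) * H) * A + sin (s * H) * B) / S) *
      ((- H * cos ((1 - s) * H) * A + H * cos (s * H) * B) / S)).
Proof.
have e : (fun r : R => ((sin ((1 - r) * H) * A + sin (r * H) * B) / S) ^+ 2) =
   ((fun r => sin ((-H) * r + H)) * cst (A / S) + (fun r => sin (H * r + 0)) * cst (B / S)) ^+ 2.
  apply/funext => r /=; rewrite !exprfctE /=. 
  congr (_ ^+ 2); rewrite /= mulrDl !mulrA; congr (sin _ * _ / _ + sin _ * _ / _); ring.
rewrite e.
have h1 := is_deriveM (@is_derive_sin_aff R (-H) H s) (is_derive_cst (A / S) s 1).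
have h2 := is_deriveM (@is_derive_sin_aff R H 0 s) (is_derive_cst (B / S) s 1).
have h3 := is_deriveX 2 (is_deriveD h1 h2).
apply: is_derive_eq h3 _.
rewrite /GRing.scale /= !mulr0 !add0r expr1.
have -> : -H * s + H = (1 - s) * H by ring.
have -> : H * s + 0 = s * H by ring.
rewrite !fctE /=.
have -> : -H * s + H = (1 - s) * H by ring.
have -> : H * s + 0 = s * H by ring.
ring.
Qed.

Lemma trigA (R : realType) (X Y S C : R) : X ^+ 2 + Y ^+ 2 = 1 -> S ^+ 2 + C ^+ 2 = 1 ->
  (S * Y - C * X) ^+ 2 + X ^+ 2 + 2 * (S * Y - C * X) * X * C = S ^+ 2.
Proof.
move=> E1 E2.
have -> : (S * Y - C * X) ^+ 2 + X ^+ 2 + 2 * (S * Y - C * X) * X * C =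
  S ^+ 2 + S ^+ 2 * (X ^+ 2 + Y ^+ 2 - 1) - X ^+ 2 * (S ^+ 2 + C ^+ 2 - 1) by ring.
by rewrite E1 E2 subrr !mulr0 subr0 addr0.
Qed.

Lemma trigB (R : realType) (X Y S C : R) : X ^+ 2 + Y ^+ 2 = 1 -> S ^+ 2 + C ^+ 2 = 1 ->
  - (S * Y - C * X) * (C * Y + S * X) + X * Y
   + ((S * Y - C * X) * Y - (C * Y + S * X) * X) * C = 0.
Proof.
move=> E1 E2.
have -> : - (S * Y - C * X) * (C * Y + S * X) + X * Y
   + ((S * Y - C * X) * Y - (C * Y + S * X) * X) * C =
  - X * Y * (S ^+ 2 + C ^+ 2 - 1) by ring.
by rewrite E2 subrr !mulr0.
Qed.

Lemma trigC (R : realType) (X Y S C : R) : X ^+ 2 + Y ^+ 2 = 1 -> S ^+ 2 + C ^+ 2 = 1 ->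
  (C * Y + S * X) ^+ 2 + Y ^+ 2 - 2 * (C * Y + S * X) * Y * C = S ^+ 2.
Proof.
move=> E1 E2.
have -> : (C * Y + S * X) ^+ 2 + Y ^+ 2 - 2 * (C * Y + S * X) * Y * C =
  S ^+ 2 + S ^+ 2 * (X ^+ 2 + Y ^+ 2 - 1) - Y ^+ 2 * (S ^+ 2 + C ^+ 2 - 1) by ring.
by rewrite E1 E2 subrr !mulr0 subr0 addr0.
Qed.

Lemma sin1m (R : realType) (s H : R) :
  sin ((1 - s) * H) = sin H * cos (s * H) - cos H * sin (s * H).
Proof. by rewrite mulrBl mul1r sinB. Qed.

Lemma cos1m (R : realType) (s H : R) :
  cos ((1 - s) * H) = cos H * cos (s * H) + sin H * sin (s * H).
Proof. by rewrite mulrBl mul1r cosB. Qed.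
Lemma taylor_lb (R : realType) (f fd : R -> R) (c : R) :
  {within `[0, 1], continuous f} -> {within `[0, 1], continuous fd} ->
  (forall s : R, 0 < s < 1 -> derivable f s 1 /\ derive1 f s = fd s) ->
  (forall s : R, 0 < s < 1 -> derivable (derive1 f) s 1) ->
  (forall s : R, 0 < s < 1 -> c <= derive1 (derive1 f) s) ->
  f 0 + fd 0 + c / 2 <= f 1.
Proof.
move=> cf cfd hf hf2 hc.
have nearin : forall s : R, 0 < s < 1 -> \forall u \near s, 0 < u < 1.
  move=> s hs; have := @near_in_itvoo R 0 1 s; rewrite in_itv /= hs => /(_ isT).
  by apply: filterS => u; rewrite in_itv.
pose K := fd - c \*: (@id R).
have dK : forall s : R, 0 < s < 1 -> is_derive s 1 K (derive1 (derive1 f) s - c *: 1).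
  move=> s hs.
  have h1 : is_derive s 1 (derive1 f) (derive1 (derive1 f) s).
    by rewrite derive1E; apply: derivableP; apply: hf2.
  have h2 : is_derive s 1 fd (derive1 (derive1 f) s).
    apply: near_eq_is_derive h1; near=> u.
    by apply: (proj2 (hf u _)); near: u; apply: nearin.
  exact: is_deriveB.
have Kmono : {in `[0, 1]%R &, {homo K : x y / x <= y}}.
  apply: ger0_derive1_le_cc.
  - by move=> x; rewrite in_itv /= => hx; have [] := dK x hx.
  - move=> x; rewrite in_itv /= => hx; rewrite derive1E.
    by rewrite (@derive_val _ _ _ _ _ _ _ (dK x hx)) scaler1 subr_ge0; apply: hc.
  - move=> x; apply: continuousD; first exact: cfd.
    exact/continuousN/continuous_subspaceT/scaler_continuous.
pose g := f - (fd 0) \*: (@id R) - (c / 2) \*: ((@id R) * (@id R)).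
have dg : forall s : R, 0 < s < 1 -> is_derive s 1 g
    (derive1 f s - fd 0 *: 1 - (c / 2) *: (id s *: 1 + id s *: 1)).
  move=> s hs.
  have h1 : is_derive s 1 f (derive1 f s).
    by rewrite derive1E; apply: derivableP; apply: (proj1 (hf s hs)).
  exact: is_deriveB.
have gmono : {in `[0, 1]%R &, {homo g : x y / x <= y}}.
  apply: ger0_derive1_le_cc.
  - by move=> x; rewrite in_itv /= => hx; have [] := dg x hx.
  - move=> x; rewrite in_itv /= => hx; rewrite derive1E.
    rewrite (@derive_val _ _ _ _ _ _ _ (dg x hx)) (proj2 (hf x hx)).
    have := Kmono 0 x; rewrite !in_itv /= lexx ler01 => /(_ isT).
    have hx' := hx; case/andP: hx' => x0 x1.
    rewrite (ltW x0) (ltW x1) => /(_ isT isT).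
    move=> H; have H' : fd 0 - c * 0 <= fd x - c * x := H.
    rewrite /GRing.scale /= !mulr1. lra.
  - move=> x; apply: continuousD; first apply: continuousD; first exact: cf.
      exact/continuousN/continuous_subspaceT/scaler_continuous.
    apply/continuousN/continuous_subspaceT => y.
    apply/differentiable_continuous/derivable1_diffP/derivableZ/derivableM;
      exact: derivable_id.
have := gmono 0 1; rewrite !in_itv /= !lexx ler01 => /(_ isT isT isT).
move=> H; have H' : f 0 - fd 0 * 0 - c / 2 * (0 * 0) <= f 1 - fd 0 * 1 - c / 2 * (1 * 1) := H.
lra.
Unshelve. all: by end_near.
Qed.

Lemma RintE (d : measure_display) (T : measurableType d) (R : realType)
  (mu : {measure set T -> \bar R}) (g f : T -> R) :
  (forall x, f x = g x) -> Rintegral mu setT f = Rintegral mu setT g.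
Proof. by move=> h; apply: eq_Rintegral => x _; apply: h. Qed.

Arguments int_sqrtprod {d T R mu r0 r1}.
Arguments Rint3 {d T R mu f g h}.
Arguments int3 {d T R mu f g h}.
Arguments intZ {d T R mu f}.
Arguments RintE {d T R mu}.
Arguments trigA {R X Y S C}.
Arguments trigB {R X Y S C}.
Arguments trigC {R X Y S C}.

Theorem proposition9 (d : measure_display) (T : measurableType d) (R : realType)
  (mu : {measure set T -> \bar R})
  (E : (T -> R) -> R) (dE : (T -> R) -> T -> R) (beta : R)
  (rhot rhos : T -> R) :
  0 <= beta ->
  FR_smooth mu E dE ->
  FR_strongly_convex mu E beta ->
  pos_density mu rhot -> pos_density mu rhos -> dens_neq mu rhot rhos ->
  E rhos >= E rhot
    + Rintegral mu setT (fun x =>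
        (dE rhot x - expect mu rhot (dE rhot)) * FR_T mu rhot rhos x * rhot x)
    + beta / 2 * Rintegral mu setT (fun x => FR_T mu rhot rhos x ^+ 2 * rhot x).
Proof.
move=> hb hS hC h0 h1 hne.
have h0' := h0; have h1' := h1.
case: h0' => m0 p0 i0 e0; case: h1' => m1 p1 i1 e1.
have sq0 x : Num.sqrt (rhot x) ^+ 2 = rhot x := sqr_sqrtr (ltW (p0 x)).
have sq1 x : Num.sqrt (rhos x) ^+ 2 = rhos x := sqr_sqrtr (ltW (p1 x)).
have r0p x : 0 < Num.sqrt (rhot x) by rewrite sqrtr_gt0.
have r1p x : 0 < Num.sqrt (rhos x) by rewrite sqrtr_gt0.
have i01 := int_sqrtprod h0 h1.
have I0 : Rintegral mu setT rhot = 1 by rewrite /Rintegral e0.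
have I1 : Rintegral mu setT rhos = 1 by rewrite /Rintegral e1.
pose p := Rintegral mu setT (fun x => Num.sqrt (rhot x) * Num.sqrt (rhos x)).
have lin a b c : Rintegral mu setT (fun x => a * rhot x + b * rhos x
    + c * (Num.sqrt (rhot x) * Num.sqrt (rhos x))) = a + b + c * p.
  by rewrite (Rint3 a b c i0 i1 i01) I0 I1 !mulr1.
have iL a b c : mu.-integrable setT (EFin \o (fun x => a * rhot x + b * rhos x
    + c * (Num.sqrt (rhot x) * Num.sqrt (rhos x)))) by apply: int3.
have p_ge0 : 0 <= p.
  by apply: Rintegral_ge0 => x _; rewrite mulr_ge0 // ltW.
have p_lt1 : p < 1.
  rewrite ltNge; apply/negP => hp.
  pose g := fun x => (Num.sqrt (rhot x) - Num.sqrt (rhos x)) ^+ 2.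
  have gE : g = (fun x => 1 * rhot x + 1 * rhos x
      + (-2) * (Num.sqrt (rhot x) * Num.sqrt (rhos x))).
    apply/funext => x; rewrite /g.
    move: (sq0 x) (sq1 x); move: (Num.sqrt (rhot x)) (Num.sqrt (rhos x)) => u v <- <-.
    ring.
  have gint : mu.-integrable setT (EFin \o g) by rewrite gE.
  have gI : Rintegral mu setT g = 2 - 2 * p by rewrite gE lin; ring.
  have g0 : Rintegral mu setT g = 0.
    apply/eqP; rewrite eq_le; apply/andP; split; first by rewrite gI; lra.
    by apply: Rintegral_ge0 => x _; rewrite /g sqr_ge0.
  have fin := integrable_fin_num measurableT gint.
  have gE0 : (\int[mu]_x (g x)%:E = 0)%E.
    rewrite -(fineK fin).
    by have -> : fine (\int[mu]_(x in setT) (EFin \o g) x)%E = 0 := g0.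
  have mg := measurable_int mu gint.
  have ae : ae_eq mu setT (EFin \o g) (cst 0%E).
    apply/(ae_eq_integral_abs mu measurableT mg).
    rewrite -gE0; apply: eq_integral => x _; rewrite gee0_abs // lee_fin /g sqr_ge0 //.
  apply: hne; apply: filterS ae => x /(_ I) /= [].
  rewrite /g => /eqP; rewrite sqrf_eq0 subr_eq0 => /eqP e.
  by rewrite -sq0 -sq1 e.
have pm : p \in `[-1, 1] by rewrite in_itv /=; apply/andP; split; lra.
pose H := FR_angle mu rhot rhos.
have HE : H = acos p := erefl.
have cH : cos H = p by rewrite HE acosK.
have sH : sin H = Num.sqrt (1 - p ^+ 2).
  by rewrite HE sin_acos //; apply/andP; split; lra.
have Spos : 0 < sin H by rewrite sH sqrtr_gt0; nra.
have S0 : sin H != 0 by rewrite gt_eqF.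
have Hpos : 0 < H by rewrite HE acos_gt0 //; apply/andP; split; lra.
have Hpi : H <= pi by rewrite HE acos_lepi //; apply/andP; split; lra.
have SC : sin H ^+ 2 = 1 - cos H ^+ 2 := sin2cos2 H.
have gform s : FR_geodesic mu rhot rhos s = fun x => ((sin ((1 - s) * H) * Num.sqrt (rhot x)
   + sin (s * H) * Num.sqrt (rhos x)) / sin H) ^+ 2 := erefl.
have vform s x : FR_velocity mu rhot rhos s x =
   2 * ((sin ((1 - s) * H) * Num.sqrt (rhot x) + sin (s * H) * Num.sqrt (rhos x)) / sin H) *
      ((- H * cos ((1 - s) * H) * Num.sqrt (rhot x) + H * cos (s * H) * Num.sqrt (rhos x)) / sin H).
  rewrite /FR_velocity /FR_geodesic /= -/H derive1E.
  exact: (@derive_val _ _ _ _ _ _ _ (@geo_deriv R H (sin H) (Num.sqrt (rhot x)) (Num.sqrt (rhos x)) s)).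
have Tform x : FR_T mu rhot rhos x = (2 * H / sin H) * ((Num.sqrt (rhos x)
    - Num.sqrt (rhot x) * cos H) / Num.sqrt (rhot x)) := erefl.
have g0 : FR_geodesic mu rhot rhos 0 = rhot.
  apply/funext => x; rewrite gform subr0 mul1r mul0r sin0 mul0r addr0 mulrAC divff // mul1r.
  exact: sq0.
have g1 : FR_geodesic mu rhot rhos 1 = rhos.
  apply/funext => x; rewrite gform subrr mul1r mul0r sin0 mul0r add0r mulrAC divff // mul1r.
  exact: sq1.
have E1 s : sin (s * H) ^+ 2 + cos (s * H) ^+ 2 = 1 by rewrite addrC cos2Dsin2.
have E2 : sin H ^+ 2 + cos H ^+ 2 = 1 by rewrite addrC cos2Dsin2.
have metric s : 0 < s < 1 -> FR_metric mu (FR_geodesic mu rhot rhos s)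
    (FR_velocity mu rhot rhos s) (FR_velocity mu rhot rhos s) = 4 * H ^+ 2.
  case/andP => s0 s1.
  have A0 : 0 < sin ((1 - s) * H) by apply: sin_gt0_pi; apply/andP; split; nra.
  have B0 : 0 < sin (s * H) by apply: sin_gt0_pi; apply/andP; split; nra.
  have wpos x : 0 < sin ((1 - s) * H) * Num.sqrt (rhot x) + sin (s * H) * Num.sqrt (rhos x).
    by rewrite addr_gt0 // mulr_gt0.
  have gne x : FR_geodesic mu rhot rhos s x != 0.
    by rewrite gform /= sqrf_eq0 mulf_neq0 ?invr_eq0 // gt_eqF // wpos.
  pose a := sin ((1 - s) * H) / sin H.
  pose b := sin (s * H) / sin H.
  pose a' := - H * cos ((1 - s) * H) / sin H.
  pose b' := H * cos (s * H) / sin H.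
  have E0 : expect mu (FR_geodesic mu rhot rhos s)
      (fun x => FR_velocity mu rhot rhos s x / FR_geodesic mu rhot rhos s x) = 0.
    rewrite /expect (RintE (fun x => (2 * a * a') * rhot x + (2 * b * b') * rhos x
        + (2 * (a * b' + a' * b)) * (Num.sqrt (rhot x) * Num.sqrt (rhos x)))); last first.
      move=> x; rewrite divfK // vform /a /b /a' /b'.
      move: (sq0 x) (sq1 x); move: (Num.sqrt (rhot x)) (Num.sqrt (rhos x)) => u v <- <-.
      ring.
    rewrite lin -cH /a /b /a' /b' sin1m cos1m.
    have tB := trigB (E1 s) E2.
    move: tB S0; set X := sin (s * H); set Y := cos (s * H); set S := sin H; set C := cos H.
    move=> tB S0.
    transitivity (2 * H / S ^+ 2 * (- (S * Y - C * X) * (C * Y + S * X) + X * Y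
      + ((S * Y - C * X) * Y - (C * Y + S * X) * X) * C)); first by field.
    by rewrite tB mulr0.
  rewrite /FR_metric /= E0.
  rewrite (RintE (fun x => (4 * a' ^+ 2) * rhot x + (4 * b' ^+ 2) * rhos x
        + (8 * a' * b') * (Num.sqrt (rhot x) * Num.sqrt (rhos x)))); last first.
    move=> x; rewrite subr0 divfK // vform gform /a /b /a' /b' /=.
    move: (wpos x) (sq0 x) (sq1 x).
    move: (Num.sqrt (rhot x)) (Num.sqrt (rhos x)) => u v wp <- <-.
    have wn := lt0r_neq0 wp.
    by field; rewrite wn S0.
  rewrite lin -cH /a' /b' cos1m.
  have tC := trigC (E1 s) E2.
  move: tC S0; set X := sin (s * H); set Y := cos (s * H); set S := sin H; set C := cos H.
  move=> tC S0.
  transitivity (4 * H ^+ 2 / S ^+ 2 * ((C * Y + S * X) ^+ 2 + Y ^+ 2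
     - 2 * (C * Y + S * X) * Y * C)); first by field.
  by rewrite tC; field.
have TT : Rintegral mu setT (fun x => FR_T mu rhot rhos x ^+ 2 * rhot x) = 4 * H ^+ 2.
  rewrite (RintE (fun x => (4 * H ^+ 2 / sin H ^+ 2 * cos H ^+ 2) * rhot x
      + (4 * H ^+ 2 / sin H ^+ 2) * rhos x
      + (- (8 * H ^+ 2 / sin H ^+ 2) * cos H) * (Num.sqrt (rhot x) * Num.sqrt (rhos x))));
    last first.
    move=> x; rewrite Tform.
    move: (r0p x) (sq0 x) (sq1 x).
    move: (Num.sqrt (rhot x)) (Num.sqrt (rhos x)) => u v up <- <-.
    have un := lt0r_neq0 up.
    by field; rewrite un S0.
  rewrite lin -cH.
  transitivity (4 * H ^+ 2 / sin H ^+ 2 * (1 - cos H ^+ 2)); first by field.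
  by rewrite -SC; field.
have V0E x : FR_velocity mu rhot rhos 0 x = (- (2 * H / sin H) * cos H) * rhot x + 0 * rhos x
    + (2 * H / sin H) * (Num.sqrt (rhot x) * Num.sqrt (rhos x)).
  rewrite vform subr0 !mul1r !mul0r sin0 cos0.
  move: (sq0 x).
  move: (Num.sqrt (rhot x)) (Num.sqrt (rhos x)) => u v <-.
  by field.
have V0int : mu.-integrable setT (EFin \o FR_velocity mu rhot rhos 0).
  apply: (eq_integrable measurableT _ _ _ (iL _ _ _)) => x _ /=.
  by rewrite V0E.
have V0I : Rintegral mu setT (FR_velocity mu rhot rhos 0) = 0.
  by rewrite (RintE _ _ V0E) lin -cH; ring.
have [hint hcf hcfd hder hder2] := hS rhot rhos h0 h1 hne.
have dint : mu.-integrable setT (EFin \o (fun x => dE rhot x * FR_velocity mu rhot rhos 0 x)).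
  have := hint 0; rewrite lexx ler01 g0 => /(_ isT).
  by [].
have MID : Rintegral mu setT (fun x =>
        (dE rhot x - expect mu rhot (dE rhot)) * FR_T mu rhot rhos x * rhot x) =
    Rintegral mu setT (fun x => dE rhot x * FR_velocity mu rhot rhos 0 x).
  rewrite (RintE (fun x => dE rhot x * FR_velocity mu rhot rhos 0 x
      - expect mu rhot (dE rhot) * FR_velocity mu rhot rhos 0 x)); last first.
    move=> x; rewrite V0E Tform.
    move: (r0p x) (sq0 x) (sq1 x).
    move: (Num.sqrt (rhot x)) (Num.sqrt (rhos x)) => u v up <- <-.
    have un := lt0r_neq0 up.
    by field; rewrite un S0.
  rewrite RintegralB //; last by apply: intZ.
  by rewrite RintegralZl // V0I mulr0 subr0.
have hc (s : R) : 0 < s < 1 -> beta * (4 * H ^+ 2) <= derive1 (derive1 (along mu E rhot rhos)) s.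
  by move=> hs; have := hC rhot rhos h0 h1 hne s hs; rewrite metric.
have key := @taylor_lb R _ _ _ hcf hcfd hder hder2 hc.
move: key; rewrite /along g0 g1 => key.
rewrite MID TT.
have -> : beta / 2 * (4 * H ^+ 2) = beta * (4 * H ^+ 2) / 2 by ring.
exact: key.
Qed.
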